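(* Let $D$ be an integral domain, $T$ an overring of $D$, $\star$ a semistar operation on $D$ and $\star'$ a semistar operation on $T$. The following are equivalent: (i) $T$ is $(\star,\star')$-linked to $D$; (ii) for every nonzero ideal $I$ of $D$, $I^{\star_f}=D^\star$ implies $(IT)^{\star'_f}=T^{\star'}$; (iii) for every quasi-$\star'_f$-ideal $J$ of $T$ with $J\ne T$, $(J\cap D)^{\star_f}\ne D^\star$; (iv) for every quasi-$\star'_f$-prime ideal $Q$ of $T$, $(Q\cap D)^{\star_f}\ne D^\star$; (v) for every quasi-$\star'_f$-maximal ideal $N$ of $T$, $(N\cap D)^{\star_f}\ne D^\star$.
   Context: Let $D$ be an integral domain with quotient field $K$. $\overline{\mathbf F}(D)$ denotes the set of all nonzero $D$-submodules of $K$ and $\mathbf f(D)$ the set of nonzero finitely generated $D$-submodules of $K$. A semistar operation on $D$ is a map $\star:\overline{\mathbf F}(D)\to\overline{\mathbf F}(D)$, $E\mapsto E^\star$, such that for all $0\ne x\in K$ and $E,F\in\overline{\mathbf F}(D)$: (1) $(xE)^\star=xE^\star$; (2) $E\subseteq F\Rightarrow E^\star\subseteq F^\star$; (3) $E\subseteq E^\star$ and $(E^\star)^\star=E^\star$. $\star_f$ is defined by $E^{\star_f}=\bigcup\{F^\star:F\in\mathbf f(D),F\subseteq E\}$. A nonzero ideal $I$ of $D$ is a quasi-$\star$-ideal if $I^\star\cap D=I$; a quasi-$\star$-prime is a prime quasi-$\star$-ideal; a quasi-$\star$-maximal ideal is a maximal element among proper quasi-$\star$-ideals. An overring of $D$ is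 a ring $T$ with $D\subseteq T\subseteq K$; the same notions are defined on $T$. $T$ is $(\star,\star')$-linked to $D$ if for every nonzero finitely generated ideal $F\subseteq D$ with $F^\star=D^\star$ one has $(FT)^{\star'}=T^{\star'}$. *)

(* Defs.v *)
From mathcomp Require Import all_boot all_algebra.
Set Implicit Arguments. Unset Strict Implicit. Unset Printing Implicit Defensive.
Import GRing.Theory.
Local Open Scope ring_scope.

Definition kset (K : Type) := K -> Prop.

Section Defs.
Variable K : fieldType.

Definition ksubset (E F : kset K) : Prop := forall x, E x -> F x.
Definition kcap (E F : kset K) : kset K := fun x => E x /\ F x.

(* R is a subring of K (hence an integral domain) *)
Definition is_subring (R : kset K) : Prop :=
  [/\ R 0, R 1, (forall x y, R x -> R y -> R (x - y)) &
      (forall x y, R x -> R y -> R (x * y))].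

Definition is_quotient_field (D : kset K) : Prop :=
  forall z : K, exists a b, [/\ D a, D b, b != 0 & z = a / b].

Definition is_overring (D T : kset K) : Prop := is_subring T /\ ksubset D T.

Definition is_module (R E : kset K) : Prop :=
  [/\ E 0, (forall x y, E x -> E y -> E (x + y)) &
      (forall r x, R r -> E x -> E (r * x))].

Definition nonzero (E : kset K) : Prop := exists x, E x /\ x != 0.

Definition Fbar (R E : kset K) : Prop := is_module R E /\ nonzero E.

Definition gen (R : kset K) (s : seq K) : kset K :=
  fun x => exists c : nat -> K, (forall i, R (c i)) /\
     x = \sum_(i < size s) c i * s`_i.

Definition ffg (R E : kset K) : Prop :=
  nonzero E /\ exists s : seq K, E = gen R s.

Definition kscale (x : K) (E : kset K) : kset K :=
  fun y => exists e, E e /\ y = x * e.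

(* semistar operation on R (a map Fbar(R) -> Fbar(R); values outside
   Fbar(R) are irrelevant) *)
Definition is_semistar (R : kset K) (st : kset K -> kset K) : Prop :=
  [/\ (forall E, Fbar R E -> Fbar R (st E)),
      (forall x E, x != 0 -> Fbar R E -> st (kscale x E) = kscale x (st E)),
      (forall E F, Fbar R E -> Fbar R F -> ksubset E F -> ksubset (st E) (st F)) &
      (forall E, Fbar R E -> ksubset E (st E) /\ st (st E) = st E)].

Definition star_f (R : kset K) (st : kset K -> kset K) : kset K -> kset K :=
  fun E x => exists F, [/\ ffg R F, ksubset F E & st F x].

Definition is_ideal (R I : kset K) : Prop := ksubset I R /\ is_module R I.
Definition nz_ideal (R I : kset K) : Prop := is_ideal R I /\ nonzero I.

Definition quasi_ideal (R : kset K) (st : kset K -> kset K) (I : kset K) : Prop :=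
  nz_ideal R I /\ kcap (st I) R = I.

Definition is_prime (R P : kset K) : Prop :=
  [/\ is_ideal R P, P <> R &
      forall a b, R a -> R b -> P (a * b) -> P a \/ P b].

Definition quasi_prime (R : kset K) (st : kset K -> kset K) (P : kset K) : Prop :=
  quasi_ideal R st P /\ is_prime R P.

Definition quasi_maximal (R : kset K) (st : kset K -> kset K) (N : kset K) : Prop :=
  [/\ quasi_ideal R st N, N <> R &
      forall J, quasi_ideal R st J -> J <> R -> ksubset N J -> J = N].

Definition extend (T F : kset K) : kset K :=
  fun x => exists (n : nat) (t f : nat -> K),
    [/\ forall i, T (t i), forall i, F (f i) & x = \sum_(i < n) t i * f i].

Definition linked (D T : kset K) (st st' : kset K -> kset K) : Prop :=
  forall F, is_ideal D F -> ffg D F -> st F = st D ->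
    st' (extend T F) = st' T.

End Defs.

(* Main.v *)
Require Import Defs.
From mathcomp Require Import all_boot all_algebra.
From mathcomp Require Import boolp classical_sets.
Set Implicit Arguments. Unset Strict Implicit. Unset Printing Implicit Defensive.
Import GRing.Theory.
Local Open Scope ring_scope.

Lemma kext (K : fieldType) (E F : kset K) : ksubset E F -> ksubset F E -> E = F.
Proof. move=> h1 h2; apply: funext => x; apply: propext; split; [exact: h1|exact: h2]. Qed.

Lemma sr_add (K : fieldType) (R : kset K) : is_subring R -> forall x y, R x -> R y -> R (x + y).
Proof.
case=> R0 R1 RB RM x y Rx Ry; have := RB x (0 - y) Rx (RB _ _ R0 Ry).
by rewrite sub0r opprK.
Qed.

Lemma module_sum (K : fieldType) (R E : kset K) n (g : 'I_n -> K) :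
  is_module R E -> (forall i, E (g i)) -> E (\sum_(i < n) g i).
Proof. by case=> E0 ED _ hg; apply: big_ind => // i _; exact: hg. Qed.

Lemma sr_module (K : fieldType) (R : kset K) : is_subring R -> is_module R R.
Proof. move=> hR; case: (hR) => R0 R1 RB RM; split => //; exact: sr_add. Qed.

Lemma Fbar_self (K : fieldType) (R : kset K) : is_subring R -> Fbar R R.
Proof.
move=> hR; split; first exact: sr_module.
by exists 1; split; [case: hR|exact: oner_neq0].
Qed.

Lemma gen_module (K : fieldType) (R : kset K) s : is_subring R -> is_module R (gen R s).
Proof.
move=> hR; case: (hR) => R0 R1 RB RM; split.
- exists (fun _ => 0); split => //; by rewrite big1 // => i _; rewrite mul0r.
- move=> x y [c [Hc ->]] [d [Hd ->]]; exists (fun i => c i + d i); split.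
    by move=> i; apply: sr_add.
  by rewrite -big_split /=; apply: eq_bigr => i _; rewrite mulrDl.
- move=> r x Rr [c [Hc ->]]; exists (fun i => r * c i); split; first by move=> i; apply: RM.
  by rewrite mulr_sumr; apply: eq_bigr => i _; rewrite mulrA.
Qed.

Lemma gen_sub (K : fieldType) (R E : kset K) s : is_module R E ->
  (forall x, x \in s -> E x) -> ksubset (gen R s) E.
Proof.
move=> hE hs x [c [Hc ->]]; apply: (module_sum hE) => i.
case: hE => _ _ hM; apply: hM => //; apply: hs; exact: mem_nth.
Qed.

Lemma gen_nth (K : fieldType) (R : kset K) s i : is_subring R -> gen R s s`_i.
Proof.
case=> R0 R1 _ _.
exists (fun j => if j == i then 1 else 0); split; first by move=> j; case: ifP.
case: (ltnP i (size s)) => hi.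
- rewrite (bigD1 (Ordinal hi)) //= eqxx mul1r big1 ?addr0 // => j hj.
  rewrite ifF ?mul0r //; apply/negbTE; move: hj; apply: contra => /eqP hj.
  by apply/eqP; exact: val_inj.
- rewrite nth_default // big1 // => j _; rewrite ifF ?mul0r //; apply/negbTE.
  by rewrite neq_ltn (leq_trans (ltn_ord j) hi).
Qed.

Lemma gen_mem (K : fieldType) (R : kset K) s x : is_subring R -> x \in s -> gen R s x.
Proof. by move=> hR hx; rewrite -(nth_index 0 hx); exact: gen_nth. Qed.

Lemma gen_mono (K : fieldType) (R R' : kset K) s : ksubset R R' -> ksubset (gen R s) (gen R' s).
Proof. by move=> h x [c [Hc ->]]; exists c; split => // i; apply: h. Qed.

Lemma ffg_Fbar (K : fieldType) (R F : kset K) : is_subring R -> ffg R F -> Fbar R F.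
Proof. move=> hR [nz [s eF]]; subst F; split => //. exact: (gen_module s hR). Qed.

Lemma ffg_ext (K : fieldType) (D T : kset K) s : is_overring D T ->
  nonzero (gen D s) -> ffg T (gen T s).
Proof.
move=> [hT DT] [x [hx x0]]; split; last by exists s.
by exists x; split => //; exact: (gen_mono DT).
Qed.

Lemma extend_gen (K : fieldType) (D T : kset K) s : is_subring D -> is_overring D T ->
  extend T (gen D s) = gen T s.
Proof.
move=> hD [hT DT]; apply: kext => x.
- move=> [n [t [f [Ht Hf ->]]]]; apply: (module_sum (gen_module s hT)) => i.
  case: (gen_module s hT) => _ _ hM; apply: hM => //; exact: (gen_mono DT).
- move=> [c [Hc ->]]; exists (size s), c, (fun i => s`_i); split => // i.
  exact: gen_nth.
Qed.

Lemma extend_mono (K : fieldType) (T F G : kset K) : ksubset F G ->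
  ksubset (extend T F) (extend T G).
Proof. by move=> h x [n [t [f [Ht Hf ->]]]]; exists n, t, f; split => // i; apply: h. Qed.

Lemma extend_sub (K : fieldType) (T F J : kset K) : is_module T J -> ksubset F J ->
  ksubset (extend T F) J.
Proof.
move=> hJ h x [n [t [f [Ht Hf ->]]]]; apply: (module_sum hJ) => i.
case: hJ => _ _ hM; apply: hM => //; exact: h.
Qed.

Lemma ideal_one (K : fieldType) (R J : kset K) : is_ideal R J -> J 1 -> J = R.
Proof.
move=> [JR [_ _ hM]] J1; apply: kext => // x Rx.
by rewrite -(mulr1 x); apply: hM.
Qed.

Lemma kscale_gen (K : fieldType) (T : kset K) b s :
  kscale b (gen T s) = gen T (map (fun z => b * z) s).
Proof.
apply: kext => y.
- move=> [e [[c [Hc ->]] ->]]; exists c; split => //.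
  rewrite size_map mulr_sumr; apply: eq_bigr => i _.
  by rewrite (nth_map 0) // mulrCA.
- move=> [c [Hc ->]]; exists (\sum_(i < size s) c i * s`_i); split; first by exists c.
  rewrite size_map mulr_sumr; apply: eq_bigr => i _.
  by rewrite (nth_map 0) // mulrCA.
Qed.

Section X. End X.

Lemma st_mono (K : fieldType) (R : kset K) st E F : is_semistar R st ->
  Fbar R E -> Fbar R F -> ksubset E F -> ksubset (st E) (st F).
Proof. by case=> _ _ h _; apply: h. Qed.

Lemma st_Fbar (K : fieldType) (R : kset K) st E : is_semistar R st -> Fbar R E -> Fbar R (st E).
Proof. by case=> h _ _ _; apply: h. Qed.

Lemma st_infl (K : fieldType) (R : kset K) st E : is_semistar R st -> Fbar R E -> ksubset E (st E).
Proof. by case=> _ _ _ h hE; case: (h E hE). Qed.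

Lemma st_idem (K : fieldType) (R : kset K) st E : is_semistar R st -> Fbar R E -> st (st E) = st E.
Proof. by case=> _ _ _ h hE; case: (h E hE). Qed.

Lemma st_unit (K : fieldType) (R G : kset K) st : is_subring R -> is_semistar R st ->
  Fbar R G -> st G 1 -> ksubset (st R) (st G).
Proof.
move=> hR hs hG G1.
have FG := st_Fbar hs hG.
rewrite -(st_idem hs hG); apply: (st_mono hs (Fbar_self hR) FG) => r Rr.
rewrite -(mulr1 r); case: FG => [[_ _ hM] _]; exact: hM.
Qed.

Lemma star_f_mono (K : fieldType) (R : kset K) st E F : ksubset E F ->
  ksubset (star_f R st E) (star_f R st F).
Proof. by move=> h x [G [HG GE Gx]]; exists G; split => // y /GE; apply: h. Qed.

Lemma star_f_le (K : fieldType) (R : kset K) st E F : is_subring R -> is_semistar R st ->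
  Fbar R F -> ksubset E F -> ksubset (star_f R st E) (st F).
Proof.
move=> hR hs hF h x [G [HG GE Gx]].
apply: (st_mono hs (ffg_Fbar hR HG) hF _ Gx) => y /GE; exact: h.
Qed.

Lemma star_f_infl (K : fieldType) (R : kset K) st E : is_subring R -> is_semistar R st ->
  is_module R E -> nonzero E -> ksubset E (star_f R st E).
Proof.
move=> hR hs hE [e [Ee e0]] x Ex.
have key : forall z : K, E z -> z != 0 -> star_f R st E z /\ star_f R st E 0.
  move=> z Ez z0.
  have Gf : ffg R (gen R [:: z]).
    split; last by exists [:: z].
    by exists z; split => //; apply: gen_mem => //; rewrite mem_head.
  have GE : ksubset (gen R [:: z]) E by apply: gen_sub => // y; rewrite inE => /eqP ->.
  split.
    exists (gen R [:: z]); split => //; apply: (st_infl hs (ffg_Fbar hR Gf)).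
    by apply: gen_mem => //; rewrite mem_head.
  exists (gen R [:: z]); split => //.
  by case: (st_Fbar hs (ffg_Fbar hR Gf)) => [[? _ _] _].
case: (eqVneq x 0) => [->|x0]; first by case: (key e Ee e0) => _; apply.
by case: (key x Ex x0).
Qed.

Lemma qmax_prime (K : fieldType) (T N : kset K) st' : is_subring T -> is_semistar T st' ->
  quasi_maximal T (star_f T st') N -> quasi_prime T (star_f T st') N.
Proof.
move=> hT hs [hq hNT hmax]; split => //.
case: (hq) => [[[NsubT Nmod] Nnz] Nq].
split; [by split|by []|].
move=> a b Ta Tb Nab.
case: (pselect (N a)) => [|Na]; first by left.
case: (pselect (N b)) => [|Nb]; first by right.
exfalso.
case: (Nmod) => N0 Nadd Nsc.
case: (hT) => T0 T1 TB TM.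
have b0 : b != 0 by apply/eqP => hb; apply: Nb; rewrite hb.
pose C : kset K := fun y => T y /\ N (b * y).
have CE : forall y, C y = (T y /\ N (b * y)) by [].
have NC : ksubset N C by move=> y Ny; rewrite CE; split; [exact: NsubT|apply: Nsc].
have Cmod : is_module T C.
  split.
  - by split => //; rewrite mulr0.
  - move=> x y [Tx Nx] [Ty Ny]; split; first exact: sr_add.
    by rewrite mulrDr; apply: Nadd.
  - move=> r x Tr [Tx Nx]; split; first exact: TM.
    by rewrite mulrCA; apply: Nsc.
have Cnz : nonzero C by case: Nnz => y [Ny y0]; exists y; split => //; apply: NC.
have Cq : quasi_ideal T (star_f T st') C.
  split; first by split => //; split => // y [].
  apply: kext => y; last first.
    by move=> Cy; split; [exact: (star_f_infl hT hs Cmod Cnz)|case: Cy].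
  move=> [[G [Gffg GC Gy]] Ty]; split => //.
  rewrite -Nq; split; last exact: TM.
  case: (Gffg) => [[g [Gg g0]] [s eG]].
  exists (kscale b G); split.
  - split; first by exists (b * g); split; [exists g|rewrite mulf_neq0].
    by exists (map (fun z => b * z) s); rewrite eG kscale_gen.
  - by move=> z [e [Ge ->]]; case: (GC e Ge).
  - case: hs => _ h2 _ _; rewrite h2 //; first by exists y.
    exact: ffg_Fbar.
have CT : C <> T.
  move=> eC; have : C 1 by rewrite eC.
  by rewrite CE mulr1 => -[].
have eCN := hmax C Cq CT NC.
have Ca : C a by rewrite CE; split => //; rewrite mulrC.
by move: Ca; rewrite eCN.
Qed.

Lemma dir_i_ii (K : fieldType) (D T : kset K) (st st' : kset K -> kset K) :
  is_subring D -> is_overring D T -> is_semistar D st -> is_semistar T st' ->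
  linked D T st st' -> forall I, nz_ideal D I -> star_f D st I = st D ->
              star_f T st' (extend T I) = st' T.
Proof.
move=> hD hO hs hs' hl I [[ID Imod] Inz] hI.
case: (hO) => hT DT.
have D1 : st D 1 by apply: (st_infl hs (Fbar_self hD)); case: hD.
rewrite -hI in D1; case: D1 => G [Gffg GI G1].
have FG := ffg_Fbar hD Gffg.
have eG : st G = st D.
  apply: kext; last exact: st_unit.
  apply: (st_mono hs FG (Fbar_self hD)) => x /GI; exact: ID.
case: (Gffg) => Gnz [s eGs]; subst G.
have := hl (gen D s) (conj (fun x h => ID x (GI x h)) FG.1) Gffg eG.
rewrite extend_gen // => hGT.
apply: kext.
- apply: (star_f_le hT hs' (Fbar_self hT)).
  apply: extend_sub; first exact: sr_module.
  by move=> x /ID; apply: DT.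
- rewrite -hGT => x hx; exists (gen T s); split => //; first exact: (ffg_ext hO).
  rewrite -(extend_gen s hD hO); exact: extend_mono.
Qed.

Lemma dir_ii_i (K : fieldType) (D T : kset K) (st st' : kset K -> kset K) :
  is_subring D -> is_overring D T -> is_semistar D st -> is_semistar T st' ->
  (forall I, nz_ideal D I -> star_f D st I = st D ->
              star_f T st' (extend T I) = st' T) -> linked D T st st'.
Proof.
move=> hD hO hs hs' hii F [FD Fmod] Fffg eF.
case: (hO) => hT DT.
have FbF := ffg_Fbar hD Fffg.
case: (Fffg) => Fnz [s eFs].
have hsf : star_f D st F = st D.
  apply: kext; first by rewrite -eF; exact: star_f_le.
  by rewrite -eF => x hx; exists F; split.
have := hii F (conj (conj FD Fmod) Fnz) hsf.
subst F; rewrite extend_gen // => h.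
have Gf := ffg_ext hO Fnz.
have FbG := ffg_Fbar hT Gf.
apply: kext.
- apply: (st_mono hs' FbG (Fbar_self hT)).
  apply: gen_sub; first exact: sr_module.
  by move=> x hx; apply: DT; apply: FD; exact: gen_mem.
- by rewrite -h; exact: star_f_le.
Qed.

Lemma dir_ii_iii (K : fieldType) (D T : kset K) (st st' : kset K -> kset K) :
  is_subring D -> is_quotient_field D -> is_overring D T -> is_semistar D st -> is_semistar T st' ->
  (forall I, nz_ideal D I -> star_f D st I = st D ->
              star_f T st' (extend T I) = st' T) ->
  forall J, quasi_ideal T (star_f T st') J -> J <> T ->
              star_f D st (kcap J D) <> st D.
Proof.
move=> hD hQ hO hs hs' hii J [[[JT Jmod] Jnz] Jq] JnT hJ.
case: (hO) => hT DT.
case: (Jmod) => J0 Jadd Jsc.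
case: (hD) => D0 D1 DB DM.
have Iid : nz_ideal D (kcap J D).
  split.
    split; first by move=> x [].
    split; first by split.
    - by move=> x y [Jx Dx] [Jy Dy]; split; [apply: Jadd|apply: sr_add].
    - move=> r x Dr [Jx Dx]; split; [apply: Jsc => //; exact: DT|exact: DM].
  case: Jnz => x [Jx x0].
  case: (hQ x) => a [b [Da Db b0 ex]].
  have ea : a = b * x by rewrite ex mulrC divfK.
  exists a; split; last first.
    by apply: contra x0 => /eqP a0; rewrite ex a0 mul0r.
  split => //; rewrite ea; apply: Jsc => //; exact: DT.
have h := hii _ Iid hJ.
have T1 : st' T 1 by apply: (st_infl hs' (Fbar_self hT)); case: hT.
rewrite -h in T1.
have J1 : star_f T st' J 1.
  apply: (star_f_mono _ T1); apply: extend_sub => //; by move=> x [].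
apply: JnT; apply: ideal_one; first by split.
by rewrite -Jq; split => //; case: hT.
Qed.

Lemma chain_fin (K : fieldType) (Fm : set (set K)) (J0 : set K) (t : seq K) :
  total_on Fm (@subset K) -> Fm J0 -> (forall z, z \in t -> exists X, Fm X /\ X z) ->
  exists X, [/\ Fm X, ksubset J0 X & forall z, z \in t -> X z].
Proof.
move=> htot FJ0; elim: t => [|x t IH] ht.
  by exists J0; split.
have [X [FX J0X tX]] : exists X, [/\ Fm X, ksubset J0 X & forall z, z \in t -> X z].
  by apply: IH => z zt; apply: ht; rewrite inE zt orbT.
have [Y [FY Yx]] := ht x (mem_head _ _).
case: (htot X Y FX FY) => [XY|YX].
- exists Y; split => // [z /J0X|z]; first exact: XY.
  by rewrite inE => /orP [/eqP ->|/tX]; [|exact: XY].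
- exists X; split => // z; rewrite inE => /orP [/eqP ->|/tX] //; exact: YX.
Qed.

Lemma decomp (K : fieldType) (A T : kset K) (y : K) (t : seq K) :
  (forall z, z \in t -> exists n u, [/\ A n, T u & z = n + y * u]) ->
  exists ns : seq K, (forall z, z \in ns -> A z) /\
    (forall z, z \in t -> exists n u, [/\ n \in ns, T u & z = n + y * u]).
Proof.
elim: t => [|x t IH] ht; first by exists [::].
have [ns [nsA tns]] : exists ns : seq K, (forall z, z \in ns -> A z) /\
    (forall z, z \in t -> exists n u, [/\ n \in ns, T u & z = n + y * u]).
  by apply: IH => z zt; apply: ht; rewrite inE zt orbT.
have [n [u [An Tu ex]]] := ht x (mem_head _ _).
exists (n :: ns); split.
  by move=> z; rewrite inE => /orP [/eqP ->|/nsA].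
move=> z; rewrite inE => /orP [/eqP ->|/tns [n' [u' [n'ns Tu' ez]]]].
  by exists n, u; split => //; rewrite mem_head.
by exists n', u'; split => //; rewrite inE n'ns orbT.
Qed.

Lemma dir_v_i (K : fieldType) (D T : kset K) (st st' : kset K -> kset K) :
  is_subring D -> is_overring D T -> is_semistar D st -> is_semistar T st' ->
  (forall N, quasi_maximal T (star_f T st') N ->
              star_f D st (kcap N D) <> st D) -> linked D T st st'.
Proof.
move=> hD hO hs hs' hv F [FD Fmod] Fffg eF.
case: (hO) => hT DT.
case: (hT) => T0 T1 TB TM.
case: (Fffg) => Fnz [s eFs]; subst F.
rewrite extend_gen //.
have Gf := ffg_ext hO Fnz.
have FbG := ffg_Fbar hT Gf.
have GT : ksubset (gen T s) T.
  apply: gen_sub; first exact: sr_module.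
  by move=> x hx; apply: DT; apply: FD; exact: gen_mem.
case: (pselect (st' (gen T s) = st' T)) => // hne; exfalso.
have n1 : ~ star_f T st' (gen T s) 1.
  move=> [H [Hffg HG H1]]; apply: hne.
  have FbH := ffg_Fbar hT Hffg.
  apply: kext; first exact: (st_mono hs' FbG (Fbar_self hT)).
  move=> x /(st_unit hT hs' FbH H1); exact: (st_mono hs' FbH FbG).
pose C (J : kset K) := [/\ is_ideal T J, ksubset (gen T s) J & ~ star_f T st' J 1].
pose P (J : set K) := C J \/ J = set0.
have CG : C (gen T s) by split => //; split => //; exact: gen_module.
have [A [PA Amax]] : exists A, P A /\ forall B, proper A B -> ~ P B.
  apply: Zorn_bigcup => Fm FP Ftot.
  have hCX : forall X x, Fm X -> X x -> C X.
    move=> X x FX Xx; case: (FP X FX) => // X0; by move: Xx; rewrite X0.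
  case: (pselect (exists J, Fm J /\ C J)) => [[J0 [FJ0 CJ0]]|nJ]; last first.
    right; apply: kext => // x [X FX Xx]; apply: nJ; exists X; split => //.
    exact: (hCX X x).
  left.
  case: (CJ0) => [[_ [J00 _ _]] GJ0 _].
  split.
  - split; first by move=> x [X FX Xx]; case: (hCX X x FX Xx) => [[XT _] _ _]; exact: XT.
    split; first by exists J0.
    + move=> x y [X FX Xx] [Y FY Yy].
      case: (Ftot X Y FX FY) => [XY|YX].
        case: (hCX Y y FY Yy) => [[_ [_ Yadd _]] _ _].
        by exists Y => //; apply: Yadd => //; exact: XY.
      case: (hCX X x FX Xx) => [[_ [_ Xadd _]] _ _].
      by exists X => //; apply: Xadd => //; exact: YX.
    + move=> r x Tr [X FX Xx]; case: (hCX X x FX Xx) => [[_ [_ _ Xsc]] _ _].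
      by exists X => //; apply: Xsc.
  - by move=> x /GJ0 hx; exists J0.
  - move=> [H [Hffg HU H1]].
    case: (Hffg) => Hnz [t eH]; subst H.
    have ht : forall z, z \in t -> exists X, Fm X /\ X z.
      by move=> z zt; case: (HU z (gen_mem hT zt)) => X FX Xz; exists X.
    have [X [FX J0X tX]] := @chain_fin _ Fm J0 t Ftot FJ0 ht.
    have [[_ Xmod] _ nX1] := hCX X 0 FX (J0X 0 J00).
    apply: nX1; exists (gen T t); split => //; exact: gen_sub.
have CA : C A.
  case: PA => // A0; exfalso.
  apply: (Amax (gen T s)); last by left.
  rewrite A0; split; first by move=> x.
  case: Gf => [[g [Gg g0]] _] hsub; exact: (hsub g Gg).
case: (CA) => [[AT Amod] GA nA1].
have Anz : nonzero A by case: Gf => [[g [Gg g0]] _]; exists g; split => //; exact: GA.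
case: (Amod) => A0 Aadd Asc.
have Aq : quasi_ideal T (star_f T st') A.
  split; first by split.
  apply: kext => y; last first.
    by move=> Ay; split; [exact: star_f_infl|exact: AT].
  move=> [ys Ty].
  case: (pselect (A y)) => // nAy; exfalso.
  pose B : kset K := fun z => exists n u, [/\ A n, T u & z = n + y * u].
  have BE : forall z, B z = exists n u, [/\ A n, T u & z = n + y * u] by [].
  have AB : ksubset A B by move=> z Az; rewrite BE; exists z, 0; split => //; rewrite mulr0 addr0.
  have CB : C B.
    split.
    - split.
        move=> z; rewrite BE => -[n [u [An Tu ->]]]; apply: sr_add => //; [exact: AT|exact: TM].
      split; first exact: AB.
      + move=> a b; rewrite !BE => -[n [u [An Tu ->]]] [n' [u' [An' Tu' ->]]].
        exists (n + n'), (u + u'); split; [exact: Aadd|exact: sr_add|].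
        by rewrite mulrDr addrACA.
      + move=> r a Tr; rewrite !BE => -[n [u [An Tu ->]]].
        exists (r * n), (r * u); split; [exact: Asc|exact: TM|].
        by rewrite mulrDr mulrCA.
    - by move=> z /GA; exact: AB.
    - move=> [H [Hffg HB H1]].
      case: (Hffg) => Hnz [t eH]; subst H.
      case: ys => M0 [M0ffg M0A M0y].
      case: (M0ffg) => M0nz [m eM]; subst M0.
      have [ns [nsA tns]] := decomp (fun z zt => HB z (gen_mem hT zt)).
      pose M := gen T (m ++ ns).
      have MA : ksubset M A.
        apply: gen_sub => // z; rewrite mem_cat => /orP [zm|zn]; last exact: nsA.
        by apply: M0A; exact: gen_mem.
      have mM : ksubset (gen T m) M.
        apply: gen_sub; first exact: gen_module.
        by move=> z zm; apply: gen_mem => //; rewrite mem_cat zm.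
      have Mffg : ffg T M.
        split; last by exists (m ++ ns).
        by case: M0nz => z [hz z0]; exists z; split => //; exact: mM.
      have FbM := ffg_Fbar hT Mffg.
      have FbSM := st_Fbar hs' FbM.
      have My : st' M y by apply: (st_mono hs' (ffg_Fbar hT M0ffg) FbM mM).
      have tM : ksubset (gen T t) (st' M).
        apply: gen_sub; first by case: FbSM.
        move=> z /tns [n [u [nns Tu ->]]].
        case: FbSM => [[_ SMadd SMsc] _].
        apply: SMadd.
          apply: (st_infl hs' FbM); apply: gen_mem => //; by rewrite mem_cat nns orbT.
        by rewrite mulrC; apply: SMsc.
      apply: nA1; exists M; split => //.
      rewrite -(st_idem hs' FbM).
      exact: (st_mono hs' (ffg_Fbar hT Hffg) FbSM tM).
  apply: (Amax B); last by left.
  split => // sBA; apply: nAy; apply: sBA; rewrite BE.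
  by exists 0, 1; split => //; rewrite mulr1 add0r.
have AnT : A <> T.
  move=> eAT; apply: nA1; apply: star_f_infl => //; by rewrite eAT.
have Aqm : quasi_maximal T (star_f T st') A.
  split => // J Jq JnT AJ.
  case: (pselect (J = A)) => // nJA; exfalso.
  case: (Jq) => [[[JT Jmod] Jnz] Jeq].
  apply: (Amax J).
    by split => // JA; apply: nJA; apply: kext.
  left; split => //; first by move=> x /GA; exact: AJ.
  move=> J1; apply: JnT; apply: ideal_one; first by split.
  by rewrite -Jeq; split.
apply: (hv A Aqm); apply: kext.
  by apply: (star_f_le hD hs (Fbar_self hD)) => x [].
rewrite -eF => x hx; exists (gen D s); split => // z hz; split; last exact: FD.
by apply: GA; exact: (gen_mono DT).
Qed.

Theorem proposition3p2 (K : fieldType) (D T : kset K)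
  (st st' : kset K -> kset K) :
  is_subring D -> is_quotient_field D -> is_overring D T ->
  is_semistar D st -> is_semistar T st' ->
  let i := linked D T st st' in
  let ii := forall I, nz_ideal D I -> star_f D st I = st D ->
              star_f T st' (extend T I) = st' T in
  let iii := forall J, quasi_ideal T (star_f T st') J -> J <> T ->
              star_f D st (kcap J D) <> st D in
  let iv := forall Q, quasi_prime T (star_f T st') Q ->
              star_f D st (kcap Q D) <> st D in
  let v := forall N, quasi_maximal T (star_f T st') N ->
              star_f D st (kcap N D) <> st D in
  [/\ i <-> ii, i <-> iii, i <-> iv & i <-> v].
Proof.
move=> hD hQ hO hs hs' i ii iii iv v.
have hT := hO.1.
have h12 : i -> ii by exact: dir_i_ii.
have h21 : ii -> i by exact: dir_ii_i.
have h23 : ii -> iii by exact: dir_ii_iii.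
have h34 : iii -> iv by move=> h Q [Qq [_ QnT _]]; exact: h.
have h45 : iv -> v by move=> h N HN; apply: h; exact: qmax_prime.
have h51 : v -> i by exact: dir_v_i.
split; split => H.
- exact: h12.
- exact: h21.
- exact: h23 (h12 H).
- exact: h51 (h45 (h34 H)).
- exact: h34 (h23 (h12 H)).
- exact: h51 (h45 H).
- exact: h45 (h34 (h23 (h12 H))).
- exact: h51 H.
Qed.
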